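(* Let $U:\mathbb{R}^d\to\mathbb{R}$ be twice continuously differentiable with $\nabla U(0)=0$ and $\sup_x\|\mathrm{D}^2U(x)\|\le\mathtt{L}$, and let $\bar\gamma>0$, $L_{\bar\gamma}=2\mathtt{L}+\bar\gamma\mathtt{L}^2$. Then for any integer $k\ge1$, $\gamma\in(0,\bar\gamma]$ and $x\in\mathbb{R}^d$, $$\int_{\mathbb{R}^d}\|y\|^2Q_\gamma^k(x,dy)\le e^{k\gamma L_{\bar\gamma}}\|x\|^2+2\gamma dk\,e^{(k-1)\gamma L_{\bar\gamma}}.$$
   Context: $Q_\gamma(x,A)=\int\mathbb{1}_A(x-\gamma\nabla U(x)+\sqrt{2\gamma}z)\varphi(z)dz$ is the unadjusted Langevin kernel, $\varphi$ the standard Gaussian density on $\mathbb{R}^d$; $Q_\gamma^k$ is its $k$-th iterate. *)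

(* Defs.v *)
From HB Require Import structures.
From mathcomp Require Import all_boot all_order all_algebra.
From mathcomp Require Import all_classical all_reals all_analysis.
Set Implicit Arguments. Unset Strict Implicit. Unset Printing Implicit Defensive.
Import Order.TTheory GRing.Theory Num.Theory.
Import numFieldNormedType.Exports.
Local Open Scope classical_set_scope.
Local Open Scope ring_scope.

Section LangevinDefs.
Variable R : realType.

Definition sqnorm2 (d : nat) (v : 'rV[R]_d) : R := \sum_(i < d) v 0 i ^+ 2.
Definition norm2 (d : nat) (v : 'rV[R]_d) : R := Num.sqrt (sqnorm2 v).

Definition phi1 (t : R) : R := normal_pdf 0 1 t.

(* Integral of a nonnegative (extended-real) function f against the standard
   Gaussian density on R^d, written as the iterated Lebesgue integral
   int ... int f(z_1,...,z_d) phi(z_1)...phi(z_d) dz_1 ... dz_d. *)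
Fixpoint gauss_int (d : nat) : ('rV[R]_d -> \bar R) -> \bar R :=
  match d return ('rV[R]_d -> \bar R) -> \bar R with
  | 0 => fun f => f 0
  | n.+1 => fun f =>
      (\int[@lebesgue_measure R]_(t in [set: R])
         (gauss_int (fun v : 'rV[R]_n => f (row_mx (const_mx t : 'rV[R]_1) v))
          * (phi1 t)%:E))%E
  end.

(* ULA kernel Q_gamma acting on nonnegative functions:
   (Q_gamma f)(x) = int f(x - gamma gradU(x) + sqrt(2 gamma) z) phi(z) dz *)
Definition ula_kernel (d : nat) (gradU : 'rV[R]_d -> 'rV[R]_d) (gamma : R)
  (f : 'rV[R]_d -> \bar R) (x : 'rV[R]_d) : \bar R :=
  gauss_int (fun z => f (x - gamma *: gradU x + Num.sqrt (2 * gamma) *: z)).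

(* k-th iterate: (Q^k f)(x) = int f(y) Q^k(x, dy) *)
Fixpoint ula_iter (d : nat) (gradU : 'rV[R]_d -> 'rV[R]_d) (gamma : R) (k : nat)
  (f : 'rV[R]_d -> \bar R) : 'rV[R]_d -> \bar R :=
  match k with
  | 0 => f
  | k'.+1 => ula_kernel gradU gamma (ula_iter gradU gamma k' f)
  end.

End LangevinDefs.

(* Main.v *)
Require Import Defs.
From HB Require Import structures.
From mathcomp Require Import all_boot all_order all_algebra.
From mathcomp Require Import all_classical all_reals all_analysis.
From mathcomp Require Import ring lra measurable_realfun.
Import Order.TTheory GRing.Theory Num.Theory.
Import numFieldNormedType.Exports.
Local Open Scope classical_set_scope.
Local Open Scope ring_scope.

Section G.
Context {R : realType}.
Notation mu := (@lebesgue_measure R).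
Definition pk : R := normal_peak 1.
Lemma phi1E : (@phi1 R) = fun t => pk * expR (- (t ^+ 2) / 2).
Proof.
apply/funext => t; rewrite /phi1 normal_pdfE ?oner_neq0 //.
by rewrite /normal_fun subr0 expr1n.
Qed.
Lemma is_derive_phi1 (t : R) : is_derive t 1 (@phi1 R) (- t * phi1 t).
Proof.
rewrite phi1E.
have h1 : is_derive t 1 (fun t : R => - (t ^+ 2) / 2) (- t).
  apply: is_derive_eq.
  rewrite !scaler0 add0r.
  have E : forall a b : R, a *: b = a * b by [].
  by rewrite !E !mulr1; field.
have h2 := is_derive1_comp (is_derive_expR _) h1.
have h3 := is_deriveZ pk h2.
have -> : (fun t0 : R => pk * expR (- t0 ^+ 2 / 2)) = pk \*: (expR \o (fun t : R => - t ^+ 2 / 2)) by [].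
apply: (is_derive_eq h3).
have E : forall a b : R, a *: b = a * b by [].
by rewrite E; ring.
Qed.

Lemma phi1_ge0 (t : R) : 0 <= phi1 t. Proof. exact: normal_pdf_ge0. Qed.
Lemma phi1N (t : R) : phi1 (- t) = phi1 t. Proof. by rewrite phi1E sqrrN. Qed.
Lemma cont_phi1 : continuous (@phi1 R).
Proof. exact: continuous_normal_pdf (oner_neq0 R). Qed.
Lemma meas_phi1 : measurable_fun setT (@phi1 R).
Proof. exact: measurable_normal_pdf. Qed.
Lemma int_phi1 : (\int[mu]_x (phi1 x)%:E = 1)%E.
Proof. exact: integral_normal_pdf. Qed.

Lemma cont_sqphi : continuous (fun x : R => x ^+ 2 * phi1 x).
Proof. move=> x; apply: cvgM; [exact: exprn_continuous | exact: cont_phi1]. Qed.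

Lemma ibp_step (b : R) : 0 < b ->
  (\int[mu]_(x in `[0%R, b]) (x ^+ 2 * phi1 x)%:E <=
   \int[mu]_(x in `[0%R, +oo[) (phi1 x)%:E)%E.
Proof.
move=> b0.
have dG : forall x : R, is_derive x 1 (fun t => - phi1 t) (x * phi1 x).
  move=> x; apply: is_derive_eq; first by apply: is_deriveN; exact: is_derive_phi1.
  by rewrite mulNr opprK.
have cphi : continuous (fun x : R => x * phi1 x).
  move=> x; apply: cvgM; [exact: cvg_id | exact: cont_phi1].
have c1 : {within `[0%R, b], continuous (cst (1:R))}.
  exact: continuous_subspaceT (fun x => cvg_cst _).
have d1 : derivable_oo_LRcontinuous (@id R) 0 b.
  split.
  + by move=> x _; exact: derivable_id.
  + exact: cvg_at_right_filter (cvg_id).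
  + exact: cvg_at_left_filter (cvg_id).
have e1 : {in `]0%R, b[, (@id R)^`()%classic =1 cst 1}.
  by move=> x _; rewrite derive1_id.
have c2 : {within `[0%R, b], continuous (fun x : R => x * phi1 x)}.
  exact: continuous_subspaceT cphi.
have d2 : derivable_oo_LRcontinuous (fun t : R => - phi1 t) 0 b.
  split.
  + by move=> x _; exact: (@ex_derive _ _ _ _ _ _ _ (dG x)).
  + apply: cvg_at_right_filter; apply: cvgN; exact: cont_phi1.
  + apply: cvg_at_left_filter; apply: cvgN; exact: cont_phi1.
have e2 : {in `]0%R, b[, (fun t : R => - phi1 t)^`()%classic =1 (fun x : R => x * phi1 x)}.
  by move=> x _; rewrite derive.derive1E; exact: (@derive_val _ _ _ _ _ _ _ (dG x)).
have E := @integration_by_parts R id (fun t => - phi1 t) (cst 1) (fun x => x * phi1 x) 0 b b0 c1 d1 e1 c2 d2 e2.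
under eq_integral do rewrite expr2 -mulrA.
rewrite E.
under eq_integral do rewrite /= mul1r EFinN.
rewrite integral_ge0N; last by move=> x _; rewrite lee_fin phi1_ge0.
rewrite mul0r subr0 oppeK.
apply: le_trans; first apply: geeDr.
  by rewrite lee_fin mulrN oppr_le0 mulr_ge0 ?phi1_ge0 // ltW.
apply: ge0_subset_integral => //=.
- by apply/measurable_EFinP/measurable_funTS; exact: meas_phi1.
- by move=> x _; rewrite lee_fin phi1_ge0.
- by apply: subset_itvl; rewrite bnd_simp.
Qed.

Lemma sqphi_ge0 (x : R) : 0 <= x ^+ 2 * phi1 x.
Proof. by rewrite mulr_ge0 ?sqr_ge0 ?phi1_ge0. Qed.

Lemma int_sqphi_le1 : (\int[mu]_x (x ^+ 2 * phi1 x)%:E <= 1)%E.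
Proof.
rewrite ge0_symfun_integralT; [|exact: sqphi_ge0|exact: cont_sqphi|by move=> x /=; rewrite sqrrN phi1N].
rewrite -int_phi1 (ge0_symfun_integralT phi1_ge0 cont_phi1); last by move=> x /=; rewrite phi1N.
rewrite -!set_itvcy.
apply: lee_wpmul2l => //.
rewrite (@ge0_integral_ereal_sup R mu _ sqphi_ge0); last first.
  exact: continuous_measurable_fun cont_sqphi.
apply: ge_ereal_sup => _ [n _ <-].
by apply: ibp_step; rewrite ltr0n.
Qed.

Lemma integralT_oppr (f : R -> \bar R) : measurable_fun setT f ->
  (forall r, (0 <= f r)%E) ->
  (\int[mu]_x f x = \int[mu]_x f (- x)%R)%E.
Proof.
move=> mf f0.
transitivity (\int[pushforward mu (-%R : _ -> measurableTypeR R)]_(y in setT) f y)%E.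
  by apply: eq_measure_integral => A mA _; exact/esym/lebesgue_measureN.
rewrite ge0_integral_pushforward //=.
Qed.

Definition m2 : R := fine (\int[mu]_x (x ^+ 2 * phi1 x)%:E)%E.
Lemma m2E : (\int[mu]_x (x ^+ 2 * phi1 x)%:E)%E = m2%:E.
Proof.
rewrite /m2 fineK // ge0_fin_numE; last by apply: integral_ge0 => x _; rewrite lee_fin sqphi_ge0.
exact: le_lt_trans int_sqphi_le1 (ltry _).
Qed.
Lemma m2_ge0 : 0 <= m2.
Proof. by rewrite -lee_fin -m2E; apply: integral_ge0 => x _; rewrite lee_fin sqphi_ge0. Qed.
Lemma m2_le1 : m2 <= 1.
Proof. by rewrite -lee_fin -m2E; exact: int_sqphi_le1. Qed.

Lemma cont_poly2 (K a c s : R) : continuous (fun t : R => K + a * (c + s * t) ^+ 2).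
Proof.
move=> x; apply: cvgD; first exact: cvg_cst.
apply: cvgM; first exact: cvg_cst.
have -> : (fun t : R => (c + s * t) ^+ 2) = (fun y => y ^+ 2) \o (fun t => c + s * t) by [].
apply: (@continuous_comp _ _ _ (fun t : R => c + s * t) (fun y : R => y ^+ 2) x); last exact: exprn_continuous.
apply: cvgD; first exact: cvg_cst.
apply: cvgM; [exact: cvg_cst | exact: cvg_id].
Qed.

Lemma oneD (K a c s : R) : 0 <= K -> 0 <= a ->
  (\int[mu]_t ((K + a * (c + s * t) ^+ 2)%:E * (phi1 t)%:E) =
   (K + a * (c ^+ 2 + s ^+ 2 * m2))%:E)%E.
Proof.
move=> K0 a0.
pose h := fun t : R => (K + a * (c + s * t) ^+ 2) * phi1 t.
have h0 : forall t, 0 <= h t.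
  by move=> t; rewrite mulr_ge0 ?phi1_ge0 // addr_ge0 // mulr_ge0 // sqr_ge0.
have ch : continuous h.
  by move=> x; apply: cvgM; [exact: cont_poly2 | exact: cont_phi1].
have chN : continuous (fun t => h (- t)).
  move=> x; apply: (@continuous_comp _ _ _ (fun t : R => - t) h x); last exact: ch.
  exact: cvgN cvg_id.
have mh : measurable_fun setT (fun t => (h t)%:E).
  by apply/measurable_EFinP; exact: continuous_measurable_fun.
have mhN : measurable_fun setT (fun t : R => (h (- t))%:E).
  by apply/measurable_EFinP; exact: continuous_measurable_fun.
transitivity (\int[mu]_t (h t)%:E)%E.
  by apply: eq_integral => t _; rewrite EFinM.
set I := (\int[mu]_t (h t)%:E)%E.
have I0 : (0 <= I)%E by apply: integral_ge0 => t _; rewrite lee_fin.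
have II : (I + I = (2 * (K + a * c ^+ 2) + 2 * a * s ^+ 2 * m2)%:E)%E.
  rewrite {2}/I (@integralT_oppr (fun t => (h t)%:E) mh) //.
  rewrite /I -ge0_integralD //; last 2 first.
    by move=> t _; rewrite lee_fin.
    by move=> t _; rewrite lee_fin.
  transitivity (\int[mu]_t ((2 * (K + a * c ^+ 2))%:E * (phi1 t)%:E +
      (2 * a * s ^+ 2)%:E * (t ^+ 2 * phi1 t)%:E))%E.
    apply: eq_integral => t _; rewrite -!EFinM -EFinD /h phi1N; congr EFin; ring.
  rewrite ge0_integralD //; last 4 first.
  - by move=> t _; rewrite -EFinM lee_fin mulr_ge0 ?phi1_ge0 // mulr_ge0 // addr_ge0 // mulr_ge0 // sqr_ge0.
  - apply: measurable_funeM; apply/measurable_EFinP; exact: meas_phi1.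
  - by move=> t _; rewrite -EFinM lee_fin mulr_ge0 ?sqphi_ge0 // mulr_ge0 ?sqr_ge0 // mulr_ge0.
  - apply: measurable_funeM; apply/measurable_EFinP; exact: continuous_measurable_fun cont_sqphi.
  rewrite ge0_integralZl //; last 3 first.
  - apply/measurable_EFinP; exact: meas_phi1.
  - by move=> t _; rewrite lee_fin phi1_ge0.
  - by rewrite lee_fin mulr_ge0 // addr_ge0 // mulr_ge0 // sqr_ge0.
  rewrite ge0_integralZl //; last 3 first.
  - apply/measurable_EFinP; exact: continuous_measurable_fun cont_sqphi.
  - by move=> t _; rewrite lee_fin sqphi_ge0.
  - by rewrite lee_fin mulr_ge0 ?sqr_ge0 // mulr_ge0.
  by rewrite int_phi1 m2E -!EFinM -EFinD mulr1.
move: II I0; case: I => [r| |] //= H _.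
by move: H; rewrite -EFinD => -[] H; congr EFin; rewrite -[LHS]/(r) ; lra.
Qed.

Lemma le_intT (f g : R -> \bar R) : (forall x, (0 <= f x)%E) -> (forall x, (f x <= g x)%E) ->
  (\int[mu]_x f x <= \int[mu]_x g x)%E.
Proof.
move=> f0 fg; rewrite !ge0_integralTE //; last by move=> x; exact: le_trans (f0 x) (fg x).
apply: le_ereal_sup => _ [h hf <-]; exists h => //= x.
exact: le_trans (hf x) (fg x).
Qed.

Lemma gauss_int_ge0 (d : nat) (f : 'rV[R]_d -> \bar R) : (forall x, (0 <= f x)%E) ->
  (0 <= gauss_int f)%E.
Proof.
elim: d f => [|n IH] f f0 /=; first exact: f0.
apply: integral_ge0 => t _; apply: mule_ge0; last by rewrite lee_fin phi1_ge0.
by apply: IH => v; exact: f0.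
Qed.

Lemma gauss_int_le (d : nat) (f g : 'rV[R]_d -> \bar R) : (forall x, (0 <= f x)%E) ->
  (forall x, (f x <= g x)%E) -> (gauss_int f <= gauss_int g)%E.
Proof.
elim: d f g => [|n IH] f g f0 fg /=; first exact: fg.
apply: le_intT => t.
  apply: mule_ge0; last by rewrite lee_fin phi1_ge0.
  by apply: gauss_int_ge0 => v; exact: f0.
apply: lee_wpmul2r; first by rewrite lee_fin phi1_ge0.
by apply: IH => v; [exact: f0 | exact: fg].
Qed.

Lemma sqnorm2_ge0 (n : nat) (w : 'rV[R]_n) : 0 <= sqnorm2 w.
Proof. by apply: sumr_ge0 => i _; rewrite sqr_ge0. Qed.

Lemma sq_split (n : nat) (w : 'rV[R]_(1 + n)) :
  sqnorm2 w = w 0 (lshift n ord0) ^+ 2 + sqnorm2 (rsubmx w).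
Proof.
rewrite /sqnorm2 big_split_ord /= big_ord1; congr (_ + _).
by apply: eq_bigr => i _; rewrite mxE.
Qed.

Lemma gauss_quad (d : nat) (a s : R) : 0 <= a -> forall (b : R) (c : 'rV[R]_d), 0 <= b ->
  gauss_int (fun z => (a * sqnorm2 (c + s *: z) + b)%:E) =
  (a * (sqnorm2 c + d%:R * s ^+ 2 * m2) + b)%:E.
Proof.
move=> a0; elim: d => [|n IH] b c b0 /=.
  by rewrite /sqnorm2 !big_ord0 !mul0r add0r mulr0.
have E : forall t, (fun v : 'rV[R]_n => (a * sqnorm2 (c + s *: row_mx (const_mx t : 'rV[R]_1) v) + b)%:E)
   = (fun v => (a * sqnorm2 (rsubmx (c : 'rV[R]_(1 + n)) + s *: v) + (a * ((c : 'rV[R]_(1 + n)) 0 (lshift n ord0) + s * t) ^+ 2 + b))%:E).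
  move=> t; apply/funext => v; rewrite sq_split.
  have -> : rsubmx (c + s *: row_mx (const_mx t : 'rV[R]_1) v : 'rV[R]_(1 + n)) = rsubmx (c : 'rV[R]_(1 + n)) + s *: v.
    apply/matrixP => i j; rewrite !mxE.
    by have -> : fintype.split (rshift 1 j) = inr j := unsplitK (inr j).
  rewrite !mxE.
  have -> : fintype.split (lshift n (ord0 : 'I_1)) = inl ord0 := unsplitK (inl ord0).
  rewrite mxE; congr EFin; ring.
transitivity (\int[mu]_t ((a * (sqnorm2 (rsubmx (c : 'rV[R]_(1 + n))) + n%:R * s ^+ 2 * m2) + b +
    a * ((c : 'rV[R]_(1 + n)) 0 (lshift n ord0) + s * t) ^+ 2)%:E * (phi1 t)%:E)%E)%E.
  apply: eq_integral => t _; rewrite E IH; first by congr (EFin _ * _)%E; ring.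
  by rewrite addr_ge0 // mulr_ge0 // sqr_ge0.
rewrite oneD //; last first.
  by rewrite addr_ge0 // mulr_ge0 // addr_ge0 ?sqnorm2_ge0 // mulr_ge0 ?m2_ge0 // mulr_ge0 ?sqr_ge0.
congr EFin; rewrite (@sq_split n c) -natr1; ring.
Qed.
End G.

Section V.
Context {R : realType}.
Definition dot {d : nat} (u w : 'rV[R]_d) : R := \sum_(i < d) u 0 i * w 0 i.

Lemma sqnorm2_ge0' {n : nat} (w : 'rV[R]_n) : 0 <= sqnorm2 w.
Proof. by apply: sumr_ge0 => i _; rewrite sqr_ge0. Qed.

Lemma norm2_ge0 {n : nat} (w : 'rV[R]_n) : 0 <= norm2 w.
Proof. exact: sqrtr_ge0. Qed.

Lemma sqr_norm2 {n : nat} (w : 'rV[R]_n) : norm2 w ^+ 2 = sqnorm2 w.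
Proof. by rewrite /norm2 sqr_sqrtr // sqnorm2_ge0'. Qed.

Lemma quad_expand {d : nat} (u w : 'rV[R]_d) (t : R) :
  sqnorm2 (t *: u - w) = t ^+ 2 * sqnorm2 u - 2 * t * dot u w + sqnorm2 w.
Proof.
rewrite /sqnorm2 /dot !mulr_sumr -sumrN -!big_split /=; apply: eq_bigr => i _.
by rewrite !mxE; ring.
Qed.

Lemma dot_sq_le {d : nat} (u w : 'rV[R]_d) : dot u w ^+ 2 <= sqnorm2 u * sqnorm2 w.
Proof.
have [A0|A0] := eqVneq (sqnorm2 u) 0.
  have u0 : forall i, u 0 i = 0.
    move=> i; move/eqP: A0; rewrite psumr_eq0; last by move=> j _; rewrite sqr_ge0.
    by move/allP => /(_ i (mem_index_enum _)) /=; rewrite sqrf_eq0 => /eqP.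
  rewrite A0 mul0r /dot big1 ?expr0n // => i _; by rewrite u0 mul0r.
have Ap : 0 < sqnorm2 u by rewrite lt_def A0 sqnorm2_ge0'.
have := sqnorm2_ge0' ((dot u w / sqnorm2 u) *: u - w).
rewrite quad_expand => H.
have : 0 <= sqnorm2 w - dot u w ^+ 2 / sqnorm2 u.
  suff -> : sqnorm2 w - dot u w ^+ 2 / sqnorm2 u =
    (dot u w / sqnorm2 u) ^+ 2 * sqnorm2 u - 2 * (dot u w / sqnorm2 u) * dot u w + sqnorm2 w by [].
  by field.
by rewrite subr_ge0 ler_pdivrMr // mulrC.
Qed.

Lemma dot_le {d : nat} (u w : 'rV[R]_d) : `|dot u w| <= norm2 u * norm2 w.
Proof.
rewrite /norm2 -sqrtrM ?sqnorm2_ge0' // -sqrtr_sqr ler_sqrt; last by rewrite mulr_ge0 ?sqnorm2_ge0'.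
by rewrite dot_sq_le.
Qed.

Lemma coord_is_derive (d : nat) (phi : R -> 'rV[R]_d) (s : R) (D : R -> 'rV[R]_d) (i : 'I_d) :
  differentiable phi s -> ('d phi s : R -> 'rV[R]_d) = D ->
  is_derive s 1 (fun r => phi r 0 i) (D 1 0 i).
Proof.
move=> dphi dE.
have @f : {linear 'rV[R]_d -> R}.
  by exists (fun N : 'rV[R]_d => N 0 i); do 2![eexists]; do ?[constructor];
     rewrite ?mxE// => ? *; rewrite ?mxE//; move=> ?; rewrite !mxE.
have cf : continuous f by exact: coord_continuous.
have df : forall N, differentiable f N by move=> N; exact: linear_differentiable.
have -> : (fun r => phi r 0 i) = f \o phi by [].
apply: DeriveDef.
  exact/diff_derivable/differentiable_comp.
rewrite deriveE; last exact: differentiable_comp.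
by rewrite diff_comp // diff_lin // dE.
Qed.

Lemma grad_mvt (d : nat) (gradU : 'rV[R]_d -> 'rV[R]_d) (hessU : 'rV[R]_d -> 'M[R]_d) :
  (forall x, differentiable gradU x /\
     ('d gradU x : 'rV[R]_d -> 'rV[R]_d) = (fun h => h *m hessU x)) ->
  gradU 0 = 0 ->
  forall x w : 'rV[R]_d, exists c : R, dot (gradU x) w = dot (x *m hessU (c *: x)) w.
Proof.
move=> Hg g0 x w.
pose phi := fun s : R => gradU (s *: x).
have dphi : forall s, differentiable phi s /\
    ('d phi s : R -> 'rV[R]_d) = (fun h : R => (h *: x) *m hessU (s *: x)).
  move=> s.
  have -> : phi = gradU \o ( *:%R^~ x) by [].
  have [dsc dscE] := is_diff_scalel s x.
  split; first exact: differentiable_comp dsc (Hg _).1.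
  rewrite diff_comp //; last exact: (Hg _).1.
  by rewrite (Hg _).2 dscE.
pose g := fun s : R => \sum_(i < d) w 0 i * phi s 0 i.
pose dg := fun s : R => \sum_(i < d) w 0 i * (x *m hessU (s *: x)) 0 i.
have gd : forall s : R, is_derive s 1 g (dg s).
  move=> s.
  have -> : g = \sum_(i < d) (fun r => w 0 i * phi r 0 i).
    by rewrite fct_sumE.
  rewrite /dg; apply: is_derive_sum => i.
  have -> : (fun r => w 0 i * phi r 0 i) = (w 0 i) \*: (fun r => phi r 0 i) by [].
  have H := @coord_is_derive _ _ _ _ i (dphi s).1 (dphi s).2.
  rewrite scale1r in H.
  exact: is_deriveZ.
have cg : continuous g.
  move=> s; apply: differentiable_continuous.
  by apply/derivable1_diffP; exact: (@ex_derive _ _ _ _ _ _ _ (gd s)).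
have [c _ Hc] := @MVT R g dg 0 1 ltr01 (fun s _ => gd s) (continuous_subspaceT cg).
exists c.
move: Hc; rewrite subr0 mulr1 /g /phi scale1r scale0r g0.
rewrite [X in _ - X]big1; last by move=> i _; rewrite mxE mulr0.
rewrite subr0 => Hc; rewrite /dot.
transitivity (\sum_(i < d) w 0 i * gradU x 0 i); first by apply: eq_bigr => i _; rewrite mulrC.
by rewrite Hc /dg; apply: eq_bigr => i _; rewrite mulrC.
Qed.

Lemma sub_expand {d : nat} (u w : 'rV[R]_d) (t : R) :
  sqnorm2 (u - t *: w) = sqnorm2 u - 2 * t * dot u w + t ^+ 2 * sqnorm2 w.
Proof.
rewrite /sqnorm2 /dot !mulr_sumr -sumrN -!big_split /=; apply: eq_bigr => i _.
by rewrite !mxE; ring.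
Qed.

Lemma sqnorm2_eq0 {d : nat} (u : 'rV[R]_d) : sqnorm2 u = 0 -> u = 0.
Proof.
move=> /eqP; rewrite psumr_eq0; last by move=> j _; rewrite sqr_ge0.
move/allP => H; apply/matrixP => i j; rewrite (ord1 i) mxE.
by move: (H j (mem_index_enum _)) => /=; rewrite sqrf_eq0 => /eqP.
Qed.

Lemma dot_self {d : nat} (u : 'rV[R]_d) : dot u u = sqnorm2 u.
Proof. by apply: eq_bigr => i _; rewrite expr2. Qed.

Lemma drift (d : nat) (gradU : 'rV[R]_d -> 'rV[R]_d) (hessU : 'rV[R]_d -> 'M[R]_d) (L gbar gamma : R) :
  (forall x, differentiable gradU x /\
     ('d gradU x : 'rV[R]_d -> 'rV[R]_d) = (fun h => h *m hessU x)) ->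
  gradU 0 = 0 ->
  (forall x v, norm2 (v *m hessU x) <= L * norm2 v) ->
  0 < gamma -> gamma <= gbar ->
  forall x, sqnorm2 (x - gamma *: gradU x) <= (1 + gamma * (2 * L + gbar * L ^+ 2)) * sqnorm2 x.
Proof.
move=> Hg g0 Hb g0' ggb x.
have [X0|X0] := eqVneq (sqnorm2 x) 0.
  have -> := @sqnorm2_eq0 _ x X0.
  have z : sqnorm2 (0 : 'rV[R]_d) = 0 by rewrite /sqnorm2 big1 // => i _; rewrite mxE expr0n.
  by rewrite g0 scaler0 subr0 z mulr0.
set w := gradU x.
have Xp : 0 < norm2 x by rewrite /norm2 sqrtr_gt0 lt_def X0 sqnorm2_ge0'.
have L0 : 0 <= L.
  have := Hb x x; have := norm2_ge0 (x *m hessU x).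
  move=> h1 h2; have := le_trans h1 h2; by rewrite pmulr_lge0.
have [c Hc] := @grad_mvt _ _ _ Hg g0 x w.
have W2 : sqnorm2 w <= L * norm2 x * norm2 w.
  rewrite -dot_self Hc; apply: le_trans (ler_norm _) _.
  apply: le_trans (dot_le _ _) _.
  by apply: ler_wpM2r; [exact: norm2_ge0 | exact: Hb].
have WL : norm2 w <= L * norm2 x.
  have [W0|W0] := eqVneq (norm2 w) 0; first by rewrite W0 mulr_ge0 // ltW.
  have Wp : 0 < norm2 w by rewrite lt_def W0 norm2_ge0.
  by rewrite -sqr_norm2 expr2 ler_pM2r in W2.
have D : - dot x w <= norm2 x * norm2 w.
  by have := dot_le x w; rewrite ler_norml => /andP[h1 _]; rewrite lerNl.
have W0 := norm2_ge0 w.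
rewrite sub_expand -!sqr_norm2.
move: D WL W0 Xp L0 g0' ggb.
set X := norm2 x; set W := norm2 w; set Dt := dot x w => D WL W0 Xp L0 g0' ggb.
have h1 : W ^+ 2 <= L ^+ 2 * X ^+ 2 by rewrite -exprMn ler_pXn2r // nnegrE ?mulr_ge0 // ltW.
have h2 : gamma * (- Dt) <= gamma * (L * X ^+ 2).
  by rewrite ler_pM2l //; apply: le_trans D _; rewrite expr2 mulrCA ler_pM2l.
have h3 : gamma ^+ 2 * (L ^+ 2 * X ^+ 2) <= gamma * gbar * (L ^+ 2 * X ^+ 2).
  by rewrite expr2; apply: ler_wpM2r; [rewrite mulr_ge0 ?sqr_ge0 | rewrite ler_pM2l].
have h4 : gamma ^+ 2 * W ^+ 2 <= gamma ^+ 2 * (L ^+ 2 * X ^+ 2).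
  by apply: ler_wpM2l; [exact: sqr_ge0 | exact: h1].
nra.
Qed.
End V.


Section M.
Context {R : realType}.
Lemma L_ge0 (d : nat) (hessU : 'rV[R]_d -> 'M[R]_d) (L : R) :
  (forall x v, norm2 (v *m hessU x) <= L * norm2 v) -> (0 < d)%N -> 0 <= L.
Proof.
move=> Hb d0.
have S : sqnorm2 (const_mx 1 : 'rV[R]_d) = d%:R.
  rewrite /sqnorm2 (eq_bigr (fun _ => 1)); last by move=> i _; rewrite mxE expr1n.
  by rewrite sumr_const card_ord.
have Xp : 0 < norm2 (const_mx 1 : 'rV[R]_d) by rewrite /norm2 S sqrtr_gt0 ltr0n.
have := le_trans (norm2_ge0 _) (Hb 0 (const_mx 1)).
by rewrite pmulr_lge0.
Qed.
End M.

Theorem lemma7 (R : realType) (d : nat) (U : 'rV[R]_d -> R)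
  (gradU : 'rV[R]_d -> 'rV[R]_d) (hessU : 'rV[R]_d -> 'M[R]_d) (L gbar : R) :
  (* U is differentiable with gradient gradU *)
  (forall x, differentiable U x /\
     ('d U x : 'rV[R]_d -> R) = (fun h => \sum_(i < d) h 0 i * gradU x 0 i)) ->
  (* gradU is differentiable with derivative given by the Hessian hessU *)
  (forall x, differentiable gradU x /\
     ('d gradU x : 'rV[R]_d -> 'rV[R]_d) = (fun h => h *m hessU x)) ->
  (* the Hessian is continuous (U is C^2) *)
  continuous hessU ->
  gradU 0 = 0 ->
  (* sup_x ||D^2 U(x)|| <= L  (operator norm w.r.t. the Euclidean norm) *)
  (forall x v, norm2 (v *m hessU x) <= L * norm2 v) ->
  0 < gbar ->
  forall (k : nat) (gamma : R) (x : 'rV[R]_d),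
  (1 <= k)%N -> 0 < gamma -> gamma <= gbar ->
  let Lg := 2 * L + gbar * L ^+ 2 in
  (ula_iter gradU gamma k (fun y => (sqnorm2 y)%:E) x <=
    (expR (k%:R * gamma * Lg) * sqnorm2 x
     + 2 * gamma * d%:R * k%:R * expR ((k%:R - 1) * gamma * Lg))%:E)%E.
Proof.
move=> _ Hg _ g0 Hb gb0 k gamma x k1 gam0 ggb; cbv zeta.
set Lg := 2 * L + gbar * L ^+ 2.
pose c := gamma * Lg.
pose s := Num.sqrt (2 * gamma).
have s2 : s ^+ 2 = 2 * gamma by rewrite /s sqr_sqrtr // mulr_ge0 // ltW.
have dr : forall y, sqnorm2 (y - gamma *: gradU y) <= expR c * sqnorm2 y.
  move=> y; apply: le_trans (@drift _ _ _ _ _ _ _ Hg g0 Hb gam0 ggb y) _.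
  by apply: ler_wpM2r; [exact: sqnorm2_ge0' | exact: expR_ge1Dx].
pose f := fun y : 'rV[R]_d => (sqnorm2 y)%:E.
pose A := fun n : nat => expR (n%:R * c).
pose B := fun n : nat => \sum_(j < n) 2 * gamma * d%:R * A j.
have A0 : forall n, 0 <= A n by move=> n; exact: expR_ge0.
have B0 : forall n, 0 <= B n.
  by move=> n; apply: sumr_ge0 => j _; rewrite !mulr_ge0 // ?ler0n // ltW.
have nn : forall n y, (0 <= ula_iter gradU gamma n f y)%E.
  elim=> [|n IH] y /=; first by rewrite /f lee_fin sqnorm2_ge0'.
  by apply: gauss_int_ge0 => z; exact: IH.
have main : forall n y, (ula_iter gradU gamma n f y <= (A n * sqnorm2 y + B n)%:E)%E.
  elim=> [|n IH] y /=.
    by rewrite /A /B mul0r expR0 mul1r big_ord0 addr0.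
  rewrite /ula_kernel.
  apply: le_trans.
    apply: (@gauss_int_le _ _ _ (fun z => (A n * sqnorm2 ((y - gamma *: gradU y) + s *: z) + B n)%:E)).
      by move=> z; exact: nn.
    by move=> z; exact: IH.
  rewrite gauss_quad // lee_fin.
  have -> : B n.+1 = B n + 2 * gamma * d%:R * A n by rewrite /B big_ord_recr.
  have -> : A n.+1 = A n * expR c by rewrite /A -expRD -natr1; congr expR; ring.
  rewrite s2.
  have h1 : A n * sqnorm2 (y - gamma *: gradU y) <= A n * expR c * sqnorm2 y.
    by rewrite -mulrA; apply: ler_wpM2l; [exact: A0 | exact: dr].
  have h2' : d%:R * (2 * gamma) * m2 <= 2 * gamma * d%:R.
    rewrite [2 * gamma * _]mulrC -[X in _ <= X]mulr1; apply: ler_wpM2l; last exact: m2_le1.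
    by rewrite mulr_ge0 ?ler0n // mulr_ge0 // ltW.
  have h2 : A n * (d%:R * (2 * gamma) * m2) <= A n * (2 * gamma * d%:R).
    by apply: ler_wpM2l; [exact: A0 | exact: h2'].
  lra.
apply: le_trans (main k x) _.
rewrite lee_fin /A mulrA; apply: lerD => //.
rewrite /B.
have [d0|dp] := eqVneq d 0%N.
  rewrite d0 big1 => [|j _]; last by rewrite mulr0n mulr0 mul0r.
  by rewrite mulr0n mulr0 !mul0r.
have L0 : 0 <= L by apply: (@L_ge0 _ _ _ _ Hb); rewrite lt0n.
have Lg0 : 0 <= Lg.
  by rewrite /Lg addr_ge0 // mulr_ge0 // ?sqr_ge0 // ltW.
have c0 : 0 <= c by rewrite /c mulr_ge0 // ltW.
have H : \sum_(j < k) 2 * gamma * d%:R * A j <= \sum_(j < k) 2 * gamma * d%:R * expR ((k%:R - 1) * gamma * Lg).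
  apply: ler_sum => j _; apply: ler_wpM2l; first by rewrite mulr_ge0 ?ler0n // mulr_ge0 // ltW.
  rewrite /A /c ler_expR mulrA; apply: ler_wpM2r; first exact: Lg0.
  apply: ler_wpM2r; first exact: ltW.
  rewrite lerBrDr natr1 ler_nat; exact: ltn_ord.
apply: le_trans H _.
rewrite sumr_const card_ord -mulr_natr le_eqVlt; apply/orP; left; apply/eqP; ring.
Qed.
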